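(* Let $\xi,\zeta$ be admissible families and suppose that for each predictable stopping time $\tau\in\mathcal T$ with $\tau>0$ a.s., $\{\xi(\tau)=\zeta(\tau)\}=\emptyset$ a.s. Then for each $\theta\in\mathcal T$ and each non-decreasing sequence of stopping times $(\theta_n)_{n\in\mathbb N}\subset\mathcal T$ with $\theta_n\uparrow\theta$, $$\{\xi(\theta)=\zeta(\theta)\}\cap\{\theta_n<\theta\text{ for all }n\}=\emptyset\quad\text{a.s.}$$
   Context: Filtered probability space $(\Omega,\mathcal F,(\mathcal F_t)_{0\le t\le T},P)$ satisfying the usual conditions, $\mathcal F=\mathcal F_T$, $\mathcal F_0$ trivial, $T\in(0,\infty)$. $\mathcal T$: stopping times valued in $[0,T]$. A family $\phi=(\phi(\theta),\theta\in\mathcal T)$ of $\overline{\mathbb R}$-valued random variables is admissible if each $\phi(\theta)$ is $\mathcal F_\theta$-measurable and $\phi(\theta)=\phi(\theta')$ a.s. on $\{\theta=\theta'\}$. ''$E=\emptyset$ a.s.'' means $P(E)=0$. *)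

(* Defs.v *)
From HB Require Import structures.
From mathcomp Require Import all_boot all_order all_algebra.
From mathcomp Require Import all_classical all_reals all_analysis measurable_realfun.
Set Implicit Arguments. Unset Strict Implicit. Unset Printing Implicit Defensive.
Import Order.TTheory GRing.Theory Num.Theory numFieldNormedType.Exports.
Local Open Scope classical_set_scope.
Local Open Scope ring_scope.

Section Filtration.
Context {d : measure_display} {Omega : measurableType d} {R : realType}.
Variables (P : probability Omega R) (T : R) (F : R -> set (set Omega)).

Definition usual_filtration : Prop :=
  (forall t, 0 <= t <= T -> sigma_algebra setT (F t)) /\
  (forall t, 0 <= t <= T -> F t `<=` measurable) /\
  (forall s t, 0 <= s -> s <= t -> t <= T -> F s `<=` F t) /\
  (forall t, 0 <= t < T ->
     F t = [set A | forall s, t < s <= T -> F s A]) /\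
  (forall N, P.-negligible N -> F 0 N) /\
  F T = [set A | measurable A] /\
  (forall A, F 0 A -> P A = 0%E \/ P A = 1%E).

Definition stopping_time (tau : Omega -> R) : Prop :=
  (forall w, 0 <= tau w <= T) /\
  (forall t, 0 <= t <= T -> F t [set w | tau w <= t]).

Definition F_at (tau : Omega -> R) : set (set Omega) :=
  [set A | forall t, 0 <= t <= T -> F t (A `&` [set w | tau w <= t])].

Definition F_at_measurable (tau : Omega -> R) (Y : Omega -> \bar R) : Prop :=
  forall B : set (\bar R), measurable B -> F_at tau (Y @^-1` B).

(** admissible family: indexed by stopping times (values of phi at
    non-stopping times are irrelevant). *)
Definition admissible (phi : (Omega -> R) -> Omega -> \bar R) : Prop :=
  (forall theta, stopping_time theta -> F_at_measurable theta (phi theta)) /\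
  (forall theta theta', stopping_time theta -> stopping_time theta' ->
     P.-negligible [set w | theta w = theta' w /\ phi theta w <> phi theta' w]).

Definition predictable (tau : Omega -> R) : Prop :=
  stopping_time tau /\
  exists taun : nat -> Omega -> R,
    [/\ (forall n, stopping_time (taun n)),
        (forall n w, taun n w <= taun n.+1 w),
        (forall w, (fun n => taun n w) @ \oo --> tau w) &
        (forall n w, 0 < tau w -> taun n w < tau w)].

End Filtration.

(* Main.v *)
Require Import Defs.
From HB Require Import structures.
From mathcomp Require Import all_boot all_order all_algebra.
From mathcomp Require Import all_classical all_reals all_analysis measurable_realfun.
From mathcomp Require Import lra.
Import Order.TTheory GRing.Theory Num.Theory numFieldNormedType.Exports.
Local Open Scope classical_set_scope.
Local Open Scope ring_scope.

Section helpers.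
Context {d : measure_display} {Omega : measurableType d} {R : realType}.
Variables (P : probability Omega R) (T : R) (F : R -> set (set Omega)).
Hypothesis hF : usual_filtration P T F.

Lemma Fsig {t} : 0 <= t <= T -> sigma_algebra setT (F t).
Proof. by case: hF => h _ /h. Qed.

Lemma FtE {t} : 0 <= t <= T ->
  F t = (measurable : set (set (g_sigma_algebraType (F t)))).
Proof. by move=> ht; rewrite measurable_g_measurableTypeE //; exact: Fsig. Qed.

Lemma Fm {t} {A : set Omega} : 0 <= t <= T -> F t A ->
  (measurable : set (set (g_sigma_algebraType (F t)))) A.
Proof. by move=> ht; rewrite -(FtE ht). Qed.

Lemma mF {t} {A : set Omega} : 0 <= t <= T ->
  (measurable : set (set (g_sigma_algebraType (F t)))) A -> F t A.
Proof. by move=> ht; rewrite -(FtE ht). Qed.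

Lemma st_le {s : Omega -> R} {t x} : stopping_time T F s -> 0 <= t <= T -> x <= t ->
  F t [set w | s w <= x].
Proof.
move=> [s0 sF] /andP[t0 tT] xt.
have [x0|x0] := ltP x 0.
  rewrite (_ : [set w | s w <= x] = set0); last first.
    apply/seteqP; split => w //= h; have := s0 w; case/andP => h1 _.
    by move: (le_lt_trans (le_trans h1 h) x0); rewrite ltxx.
  have ht : 0 <= t <= T by rewrite t0 tT.
  by rewrite (FtE ht).
case: hF => _ [_ [mono _]].
apply: (mono x t) => //; apply: sF; rewrite x0 /=; exact: le_trans xt tT.
Qed.

Lemma st_min_le {s : Omega -> R} {t} x : stopping_time T F s -> 0 <= t <= T ->
  F t [set w | Num.min (s w) t <= x].
Proof.
move=> hs ht.
have [tx|xt] := leP t x.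
  rewrite (_ : [set w | _] = setT); last first.
    by apply/seteqP; split => w //= _; rewrite ge_min tx orbT.
  by rewrite (FtE ht).
rewrite (_ : [set w | _] = [set w | s w <= x]); last first.
  apply/seteqP; split => w /=; rewrite ge_min; first by case/orP => // /(lt_le_trans xt); rewrite ltxx.
  by move=> ->.
exact: st_le (ltW xt).
Qed.

Lemma st_min_mf {s : Omega -> R} {t} : stopping_time T F s -> 0 <= t <= T ->
  measurable_fun (setT : set (g_sigma_algebraType (F t))) (fun w => Num.min (s w) t).
Proof.
move=> hs ht; apply: (measurability _ (RGenOInfty.measurableE R)).
move=> /= _ [_ [x ->] <-]; rewrite setTI.
rewrite (_ : _ @^-1` _ = ~` [set w | Num.min (s w) t <= x]); last first.
  by apply/seteqP; split => w /=; rewrite in_itv /= andbT ?ltNge; [move/negP|move/negP].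
rewrite -(FtE ht) -setTD; case: (Fsig ht) => _ hC _; apply: hC.
exact: st_min_le.
Qed.

Lemma F_lt {f g : Omega -> R} {t} : 0 <= t <= T ->
  measurable_fun (setT : set (g_sigma_algebraType (F t))) f ->
  measurable_fun (setT : set (g_sigma_algebraType (F t))) g ->
  F t [set w | f w < g w].
Proof.
move=> ht mf mg; rewrite (FtE ht).
have := @measurable_fun_ltr _ (g_sigma_algebraType (F t)) R setT f g mf mg measurableT [set true] I.
rewrite setTI; congr (measurable _); apply/seteqP; split => w /=; by [].
Qed.


Lemma L1 (s th : Omega -> R) t : stopping_time T F s -> stopping_time T F th ->
  0 <= t <= T -> F t ([set w | s w < th w] `&` [set w | s w <= t]).
Proof.
move=> hs hth ht.
have mlt := F_lt ht (st_min_mf hs ht) (st_min_mf hth ht).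
have hsle := st_le hs ht (lexx t).
have hthle := st_le hth ht (lexx t).
rewrite (_ : _ `&` _ = ([set w | Num.min (s w) t < Num.min (th w) t] `&` [set w | s w <= t])
   `|` ([set w | s w <= t] `&` ~` [set w | th w <= t])); last first.
  apply/seteqP; split => w /=.
    move=> [slt st]; have [tht|tht] := leP (th w) t.
      by left; split => //; rewrite (min_l st).
    by right.
  case=> [[]|[st /negP]]; last by rewrite -ltNge => tht; split => //; exact: le_lt_trans tht.
  move=> + st; rewrite (min_l st) lt_min => /andP[h _]; by split.
apply: (mF ht); apply: measurableU; apply: measurableI; try exact: (Fm ht).
apply: measurableC; exact: (Fm ht).
Qed.

Lemma L2 (s th : Omega -> R) t : stopping_time T F s -> stopping_time T F th ->
  0 <= t <= T -> F t ([set w | s w < th w] `&` [set w | th w <= t]).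
Proof.
move=> hs hth ht.
have mlt := F_lt ht (st_min_mf hs ht) (st_min_mf hth ht).
have hthle := st_le hth ht (lexx t).
rewrite (_ : _ `&` _ = ([set w | Num.min (s w) t < Num.min (th w) t] `&` [set w | th w <= t])); last first.
  apply/seteqP; split => w /=.
    move=> [slt tht]; split => //; rewrite (min_l tht) (min_l (ltW (lt_le_trans slt tht))) //.
  move=> [+ tht]; rewrite (min_l tht) => h; split => //.
  have [st|st] := leP (s w) t; first by rewrite (min_l st) in h.
  by rewrite (min_r (ltW st)) in h; move: (le_lt_trans tht h); rewrite ltxx.
apply: (mF ht); apply: measurableI; exact: (Fm ht).
Qed.

End helpers.

Lemma cvg_minr_seq (R : realType) (u v : nat -> R) a b :
  u @ \oo --> a -> v @ \oo --> b ->
  (fun n => Num.min (u n) (v n)) @ \oo --> Num.min a b.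
Proof.
move=> ua vb.
have -> : (fun n => Num.min (u n) (v n)) = (fun n => (u n + v n - `|u n - v n|) / 2).
  by apply/funext => n; rewrite minr_absE.
rewrite minr_absE; apply: cvgM; last exact: cvg_cst.
apply: cvgB; first exact: cvgD.
apply: cvg_norm; exact: cvgB.
Qed.

Lemma cvg_c (R : realType) (T : R) :
  (fun n => T - T / (n.+1)%:R) @ \oo --> T.
Proof.
have -> : (fun n => T - T / (n.+1)%:R) = (fun n => T - T * harmonic n) by [].
rewrite -[X in _ --> X]subr0 -[X in _ --> _ - X](mulr0 T).
apply: cvgB; first exact: cvg_cst.
apply: cvgM; [exact: cvg_cst|exact: cvg_harmonic].
Qed.

Lemma c_props (R : realType) (T : R) n : 0 < T ->
  [/\ 0 <= T - T / (n.+1)%:R, T - T / (n.+1)%:R < T &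
      T - T / (n.+1)%:R <= T - T / (n.+2)%:R].
Proof.
move=> T0.
have k1 : 1 <= (n.+1)%:R :> R by rewrite ler1n.
have k0 : 0 < (n.+1)%:R :> R by rewrite ltr0n.
have i0 : 0 < ((n.+1)%:R :> R)^-1 by rewrite invr_gt0.
have i1 : ((n.+1)%:R :> R)^-1 <= 1 by rewrite invf_le1.
have i2 : ((n.+2)%:R :> R)^-1 <= ((n.+1)%:R)^-1.
  by rewrite lef_pV2 ?posrE ?ltr0n // ler_nat.
move: i0 i1 i2.
move: ((n.+1)%:R^-1 : R) ((n.+2)%:R^-1 : R) => a b a0 a1 ba.
have h1 : 0 <= T * (1 - a) by apply: mulr_ge0; [exact: ltW|rewrite subr_ge0].
have h2 : 0 < T * a by rewrite mulr_gt0.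
have h3 : 0 <= T * (a - b) by apply: mulr_ge0; [exact: ltW|rewrite subr_ge0].
rewrite mulrBr mulr1 in h1; rewrite mulrBr in h3.
split; lra.
Qed.

Theorem lemma4p7 (d : measure_display) (Omega : measurableType d) (R : realType)
  (P : probability Omega R) (T : R) (F : R -> set (set Omega))
  (hT : 0 < T) (hF : usual_filtration P T F)
  (xi zeta : (Omega -> R) -> Omega -> \bar R)
  (hxi : admissible P T F xi) (hzeta : admissible P T F zeta)
  (hpred : forall tau, predictable T F tau ->
     P.-negligible [set w | ~ (0 < tau w)] ->
     P.-negligible [set w | xi tau w = zeta tau w])
  (theta : Omega -> R) (thetan : nat -> Omega -> R)
  (htheta : stopping_time T F theta)
  (hthetan : forall n, stopping_time T F (thetan n))
  (hmono : forall n w, thetan n w <= thetan n.+1 w)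
  (hlim : forall w, (fun n => thetan n w) @ \oo --> theta w) :
  P.-negligible [set w | xi theta w = zeta theta w /\
                         (forall n, thetan n w < theta w)].
Proof.
have mF' := @mF _ _ _ P T F hF.
have Fm' := @Fm _ _ _ P T F hF.
have L1' := @L1 _ _ _ P T F hF.
have L2' := @L2 _ _ _ P T F hF.
have FT t (ht : 0 <= t <= T) : F t setT by apply: mF' => //; exact: measurableT.
have mle w : {homo (fun n => thetan n w) : n m / (n <= m)%N >-> n <= m}.
  by apply/nondecreasing_seqP => n; exact: hmono.
have thle n w : thetan n w <= theta w.
  rewrite -(cvg_lim _ (hlim w)) //; apply: nondecreasing_cvgn_le; first exact: mle.
  by apply/cvg_ex; exists (theta w); exact: hlim.
have th0 w : 0 <= theta w <= T by case: htheta => h _; exact: h.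
have thn0 n w : 0 <= thetan n w <= T by case: (hthetan n) => h _; exact: h.
pose A := [set w | forall n, thetan n w < theta w].
pose c n : R := T - T / (n.+1)%:R.
have cP n := @c_props R T n hT.
pose taun n w := if thetan n w < theta w then Num.min (thetan n w) (c n) else c n.
pose tau w := if `[< A w >] then theta w else T.
have taunc n w : taun n w <= c n.
  by rewrite /taun; case: ifP => _ //; rewrite ge_min lexx orbT.
have stn n : stopping_time T F (taun n).
  split.
    move=> w; rewrite /taun; case: (cP n) => c0 cT _.
    case: ifP => _; last by rewrite c0 ltW.
    rewrite le_min c0; case/andP: (thn0 n w) => -> /=.
    by rewrite ge_min (ltW cT) orbT.
  move=> t ht; have [ct|tc] := leP (c n) t.
    rewrite (_ : [set w | _] = setT); first exact: FT.
    by apply/seteqP; split => w //= _; exact: le_trans (taunc n w) ct.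
  rewrite (_ : [set w | _] = [set w | thetan n w < theta w] `&` [set w | thetan n w <= t]).
    exact: L1'.
  apply/seteqP; split => w /=; rewrite /taun.
    case: ifP => h; last by move/(lt_le_trans tc); rewrite ltxx.
    rewrite ge_min => /orP[] h'; first by [].
    by move: (lt_le_trans tc h'); rewrite ltxx.
  by move=> [-> h]; rewrite ge_min h.
have tau0 w : 0 < tau w.
  rewrite /tau; case: asboolP => // Aw.
  by case/andP: (thn0 0%N w) => h _; exact: le_lt_trans h (Aw 0%N).
have st : stopping_time T F tau.
  split.
    move=> w; rewrite /tau; case: asboolP => _; first exact: th0.
    by rewrite lexx ltW.
  move=> t ht; case/andP: (ht) => t0; rewrite le_eqVlt => /orP[/eqP tT|tT].
    rewrite (_ : [set w | _] = setT); first exact: FT.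
    apply/seteqP; split => w //= _; rewrite tT /tau; case: asboolP => _ //.
    by case/andP: (th0 w).
  rewrite (_ : [set w | _] = \bigcap_n ([set w | thetan n w < theta w] `&` [set w | theta w <= t])).
    apply: mF' => //; apply: bigcapT_measurable => n; apply: Fm' => //; exact: L2'.
  apply/seteqP; split => w /=; rewrite /tau; case: asboolP => Aw.
  - by move=> h n _; split => //; exact: Aw.
  - by move/(lt_le_trans tT); rewrite ltxx.
  - by move=> h; have [_ ?] := h 0%N I.
  - by move=> h; exfalso; apply: Aw => n; have [] := h n I.
have pr : predictable T F tau.
  split => //; exists taun; split => //.
  - move=> n w; case: (cP n) => _ _ cc.
    have [h1|h1] := boolP (thetan n.+1 w < theta w).
      have h0 : thetan n w < theta w by exact: le_lt_trans (hmono n w) h1.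
      rewrite /taun h0 h1 le_min; apply/andP; split; rewrite ge_min.
        by rewrite hmono.
      by rewrite cc orbT.
    rewrite /taun (negbTE h1); exact: le_trans (taunc n w) cc.
  - move=> w; rewrite /tau; case: asboolP => Aw.
      have -> : (fun n => taun n w) = (fun n => Num.min (thetan n w) (c n)).
        by apply/funext => n; rewrite /taun (Aw n).
      have -> : theta w = Num.min (theta w) T by rewrite min_l //; case/andP: (th0 w).
      exact: (@cvg_minr_seq R _ _ _ _ (hlim w) (@cvg_c R T)).
    have [m hm] : exists m, ~ (thetan m w < theta w).
      by apply/existsNP => h; apply: Aw => n; exact: h.
    have hc := @cvg_c R T; apply: cvg_trans hc; apply: near_eq_cvg.
    have hm' : theta w <= thetan m w by rewrite leNgt; apply/negP.
    exists m => // k /= mk; rewrite /taun ifF //; apply/negP => hk.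
    by move: (le_trans hm' (mle w m k mk)); rewrite leNgt hk.
  - move=> n w _; rewrite /tau; case: asboolP => Aw.
      by rewrite /taun (Aw n) gt_min (Aw n).
    by case: (cP n) => _ cT _; exact: le_lt_trans (taunc n w) cT.
have N1 : P.-negligible [set w | xi tau w = zeta tau w].
  apply: hpred => //.
  rewrite (_ : [set w | _] = set0); first exact: negligible_set0.
  by apply/seteqP; split => w //= /(_ (tau0 w)).
have N2 := hxi.2 tau theta st htheta.
have N3 := hzeta.2 tau theta st htheta.
apply: (negligibleS _ (negligibleU (negligibleU N1 N2) N3)).
move=> w /= [e Aw]; have tw : tau w = theta w by rewrite /tau asboolT.
have [ex|ex] := pselect (xi tau w = xi theta w); last by left; right.
have [ez|ez] := pselect (zeta tau w = zeta theta w); last by right.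
by left; left; rewrite ex ez.
Qed.
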